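(* Let $X$ be a separable metric space, $\mathbb P$ the completion of a Borel probability measure on $X$ restricted to the universal $\sigma$-algebra $\mathscr U(X)$, and let $A\mapsto A^\epsilon$ be a set operation on subsets of $X$ such that $A^\epsilon\in\mathscr U(X)$ whenever $A\in\mathscr U(X)$, and such that for every sequence of sets $\{A_i\}$, $$\bigcup_{i=1}^\infty A_i^\epsilon=\Big(\bigcup_{i=1}^\infty A_i\Big)^\epsilon,\qquad\bigcap_{i=1}^\infty A_i^\epsilon\supseteq\Big(\bigcap_{i=1}^\infty A_i\Big)^\epsilon.$$ Set $A^{-\epsilon}=((A^C)^\epsilon)^C$ and $R^\epsilon(A)=\int(1-\eta(x))\mathbb 1_{A^\epsilon}(x)+\eta(x)\mathbb 1_{(A^C)^\epsilon}(x)\,d\mathbb P$. Let $\{A_n\}$ be a minimizing sequence of $R^\epsilon$ for which $\liminf A_n^\epsilon\doteq\limsup A_n^\epsilon$ and $\liminf A_n^{-\epsilon}=\limsup A_n^{-\epsilon}$. Then there is a decreasing minimizing sequence $\{B_n\}$ ($B_{n+1}\subseteq B_n$) for which $\liminf B_n^\epsilon\doteq\limsup B_n^\epsilon=\limsup A_n^\epsilon$ and $\limsup B_n^{-\epsilon}\doteq\liminf B_n^{-\epsilon}\supseteq\liminf A_n^{-\epsilon}$, the last containment holding up to a $\mathbb P$-null set.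
   Context: $\mathcal D$ is a probability distribution on $X\times\{-1,+1\}$, $\eta(x)=\mathcal D(Y=+1\mid x)\in[0,1]$, $\mathbb P$ its marginal. $\mathscr U(X)$ is the intersection over all $\sigma$-finite Borel measures $\nu$ on $X$ of the $\nu$-completion $\sigma$-algebras. A minimizing sequence is $\{A_n\}\subseteq\mathscr U(X)$ with $R^\epsilon(A_n)\to\inf_{S\in\mathscr U(X)}R^\epsilon(S)$. $\limsup A_n=\bigcap_N\bigcup_{n\ge N}A_n$, $\liminf A_n=\bigcup_N\bigcap_{n\ge N}A_n$; $\doteq$ is equality up to $\mathbb P$-null sets. *)

(* Defs.v *)
From HB Require Import structures.
From mathcomp Require Import all_boot all_order all_algebra.
From mathcomp Require Import all_classical all_reals all_analysis.
From mathcomp Require Import measurable_realfun.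
Set Implicit Arguments. Unset Strict Implicit. Unset Printing Implicit Defensive.
Import Order.TTheory GRing.Theory Num.Theory.
Import numFieldNormedType.Exports.
Local Open Scope classical_set_scope.
Local Open Scope ring_scope.

Definition separable_space (X : ptopologicalType) : Prop :=
  exists D : set X, countable D /\ closure D = [set: X].

Definition borelType (X : ptopologicalType) : measurableType _ :=
  g_sigma_algebraType (@open X).

Definition universal {R : realType} (X : ptopologicalType) : set (set X) :=
  fun A => forall nu : {measure set (borelType X) -> \bar R},
    sigma_finite [set: borelType X] nu ->
    completed_algebra_gen nu A.

Definition univType (R : realType) (X : ptopologicalType) : measurableType _ :=
  g_sigma_algebraType (@universal R X).

Definition set_limsup {T} (A : nat -> set T) : set T :=
  \bigcap_N \bigcup_(n in [set n | (N <= n)%N]) A n.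
Definition set_liminf {T} (A : nat -> set T) : set T :=
  \bigcup_N \bigcap_(n in [set n | (N <= n)%N]) A n.

Definition neg_op {T} (op : set T -> set T) (A : set T) : set T :=
  ~` op (~` A).

Definition adv_risk {R : realType} {X : ptopologicalType}
  (P : {measure set (univType R X) -> \bar R}) (eta : X -> R)
  (op : set X -> set X) (A : set X) : \bar R :=
  (\int[P]_(x in [set: univType R X])
     ((1 - eta x)%:E * (\1_(op A) x)%:E + (eta x)%:E * (\1_(op (~` A)) x)%:E))%E.

Definition minimizing_seq {R : realType} {X : ptopologicalType}
  (P : {measure set (univType R X) -> \bar R}) (eta : X -> R)
  (op : set X -> set X) (A : nat -> set X) : Prop :=
  (forall n, @universal R X (A n)) /\
  (fun n => adv_risk P eta op (A n)) @ \oo -->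
     ereal_inf [set adv_risk P eta op S | S in @universal R X].

Definition ae_set_eq {R : realType} {X : ptopologicalType}
  (P : {measure set (univType R X) -> \bar R}) (A B : set X) : Prop :=
  P.-negligible ((A `\` B) `|` (B `\` A)).

Definition ae_subset {R : realType} {X : ptopologicalType}
  (P : {measure set (univType R X) -> \bar R}) (A B : set X) : Prop :=
  P.-negligible (A `\` B).

(* Main.v *)
Require Import Defs.
From HB Require Import structures.
From mathcomp Require Import all_boot all_order all_algebra.
From mathcomp Require Import all_classical all_reals all_analysis.
From mathcomp Require Import measurable_realfun.
From mathcomp Require Import lra.
Import Order.TTheory GRing.Theory Num.Theory.
Import numFieldNormedType.Exports.
Local Open Scope classical_set_scope.
Local Open Scope ring_scope.

Lemma universalC (R : realType) (X : ptopologicalType) (A : set X) :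
  @universal R X A -> @universal R X (~` A).
Proof.
move=> UA nu snu; have [B mB [N [M [mM M0 NM]]] <-] := UA nu snu.
exists (~` B `\` M); first by apply: measurableD => //; apply: measurableC.
exists (~` (B `|` N) `&` M).
  by exists M; split => // x [].
apply/seteqP; split => x /=.
  by move=> [[nB nM]|[]//]; move=> [//|Nx]; apply: nM; exact: NM.
move=> nBN; have [Mx|nMx] := pselect (M x); first by right.
by left; split => // Bx; apply: nBN; left.
Qed.

Lemma universal_bigcup (R : realType) (X : ptopologicalType) (F : nat -> set X) :
  (forall i, @universal R X (F i)) -> @universal R X (\bigcup_i F i).
Proof.
move=> UF nu snu.
pose G i := cid2 (UF i nu snu).
pose Nn i := cid2 (projT2 (cid2 (UF i nu snu))).2.
exists (\bigcup_i sval (G i)).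
  by apply: bigcupT_measurable => i; exact: (projT2 (G i)).1.
exists (\bigcup_i sval (Nn i)).
  by apply: negligible_bigcup => i; exact: (projT2 (Nn i)).1.
apply/seteqP; split => x /=.
  move=> [[i _ Gx]|[i _ Nx]]; exists i => //; rewrite -(projT2 (Nn i)).2.
    by left.
  by right.
move=> [i _]; rewrite -(projT2 (Nn i)).2 => -[Gx|Nx]; [left|right]; by exists i.
Qed.

Lemma liminf_dec T (C : nat -> set T) : (forall n, C n.+1 `<=` C n) ->
  set_liminf C = set_limsup C.
Proof.
move=> dC; have dC' : forall m n, (m <= n)%N -> C n `<=` C m.
  move=> m n /subnK <-; elim: (n - m)%N => [|k IH] //= x.
  by rewrite addSn => /dC /IH.
apply/seteqP; split => x.
  move=> [N _ hN] M _; exists (maxn N M); first by rewrite /= leq_maxr.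
  by apply: hN; rewrite /= leq_maxl.
move=> hx; exists 0%N => // n _; have [m /= nm Cm] := hx n I.
exact: dC' nm _ Cm.
Qed.

Theorem lemma39 (R : realType) (X : pseudoPMetricType R)
  (hX : hausdorff_space X) (sepX : separable_space X)
  (mu : probability (borelType X) R)
  (P : {measure set (univType R X) -> \bar R})
  (hPmu : forall B : set X, @measurable _ (borelType X) B ->
            P B = mu B)
  (eta : X -> R)
  (eta01 : forall x, 0 <= eta x <= 1)
  (meta : measurable_fun [set: univType R X] eta)
  (op : set X -> set X)
  (op_univ : forall A, @universal R X A -> @universal R X (op A))
  (op_cup : forall F : nat -> set X,
     \bigcup_i op (F i) = op (\bigcup_i F i))
  (op_cap : forall F : nat -> set X,
     op (\bigcap_i F i) `<=` \bigcap_i op (F i))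
  (A : nat -> set X)
  (hAmin : minimizing_seq P eta op A)
  (hA1 : ae_set_eq P (set_liminf (fun n => op (A n)))
                     (set_limsup (fun n => op (A n))))
  (hA2 : set_liminf (fun n => neg_op op (A n)) =
         set_limsup (fun n => neg_op op (A n))) :
  exists B : nat -> set X,
    minimizing_seq P eta op B /\
    (forall n, B n.+1 `<=` B n) /\
    ae_set_eq P (set_liminf (fun n => op (B n)))
                (set_limsup (fun n => op (B n))) /\
    set_limsup (fun n => op (B n)) = set_limsup (fun n => op (A n)) /\
    ae_set_eq P (set_limsup (fun n => neg_op op (B n)))
                (set_liminf (fun n => neg_op op (B n))) /\
    ae_subset P (set_liminf (fun n => neg_op op (A n)))
                (set_liminf (fun n => neg_op op (B n))).
Proof.
have op_mono : forall S T, S `<=` T -> op S `<=` op T.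
  move=> S T ST x Sx; pose F := fun i : nat => if i == 0%N then S else T.
  have -> : T = \bigcup_i F i.
    apply/seteqP; split => y; first by move=> Ty; exists 1%N.
    by move=> [[|i] _]; rewrite /F /=; [apply: ST|].
  by rewrite -op_cup; exists 0%N.
have [UA cvgA] := hAmin.
pose B n := \bigcup_i A (n + i)%N.
have UB n : @universal R X (B n) by apply: universal_bigcup => i; exact: UA.
have AB n m : (n <= m)%N -> A m `<=` B n.
  by move=> nm x Ax; exists (m - n)%N => //; rewrite subnKC.
have Bdec n : B n.+1 `<=` B n.
  by move=> x [i _ Ax]; exists i.+1 => //; rewrite addnS -addSn.
have Bdec' m n : (m <= n)%N -> B n `<=` B m.
  move=> mn x [i _ Ax]; exists (n - m + i)%N => //; rewrite addnA subnKC //.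
have opB n : op (B n) = \bigcup_i op (A (n + i)%N) by rewrite op_cup.
have negB n : neg_op op (B n.+1) `<=` neg_op op (B n).
  move=> x nx Bx; apply: nx; apply: op_mono Bx => y /= nBy By; apply: nBy.
  exact: Bdec.
have opBdec n : op (B n.+1) `<=` op (B n) by apply: op_mono; exact: Bdec.
have limsupE : set_limsup (fun n => op (B n)) = set_limsup (fun n => op (A n)).
  apply/seteqP; split => x hx N _.
    have [n /= Nn] := hx N I; rewrite opB => -[i _ xi].
    by exists (n + i)%N => //=; rewrite (leq_trans Nn) // leq_addr.
  have [n /= Nn xn] := hx N I; exists n => //; rewrite opB.
  by exists 0%N => //; rewrite addn0.
have negsub : set_liminf (fun n => neg_op op (A n)) `<=`
              set_liminf (fun n => neg_op op (B n)).
  move=> x [N _ hN]; exists N => // n /= Nn hB; apply: (hN n Nn).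
  have : ~` B n = \bigcap_i ~` A (n + i)%N.
    apply/seteqP; split => y; first by move=> nB i _ Ay; apply: nB; exists i.
    by move=> hy [i _ Ay]; apply: (hy i I).
  move=> E; rewrite E in hB.
  by have := @op_cap (fun i => ~` A (n + i)%N) x hB 0%N I; rewrite addn0.
exists B; split; last first.
  split => //; split.
    by rewrite liminf_dec // /ae_set_eq setDv setU0; exact: negligible_set0.
  split => //; split.
    by rewrite liminf_dec // /ae_set_eq setDv setU0; exact: negligible_set0.
  rewrite /ae_subset.
  have -> : set_liminf (fun n => neg_op op (A n)) `\`
            set_liminf (fun n => neg_op op (B n)) = set0.
    by apply/seteqP; split => x // [/negsub].
  exact: negligible_set0.
split => //.
set T := univType R X.
set iota := ereal_inf _.
have mU S : @universal R X S -> @measurable _ T S.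
  by move=> US; apply: sub_sigma_algebra.
pose g S (x : X) := ((1 - eta x)%:E * (\1_(op S) x)%:E +
                     (eta x)%:E * (\1_(op (~` S)) x)%:E)%E.
have g0 S x : (0 <= g S x)%E.
  have /andP[e0 e1] := eta01 x.
  by rewrite adde_ge0 // mule_ge0 // lee_fin ?subr_ge0 // indicE.
have mg S : @universal R X S -> measurable_fun [set: T] (g S).
  move=> US; apply: emeasurable_funD; apply: emeasurable_funM;
    apply: measurableT_comp => //.
  - by apply: measurable_funB => //; exact: measurable_cst.
  - by apply: measurable_indic; apply: mU; exact: op_univ.
  - by apply: measurable_indic; apply: mU; apply: op_univ; exact: universalC.
have riskE S : adv_risk P eta op S = (\int[P]_(x in [set: T]) g S x)%E by [].
have iota0 : (0 <= iota)%E.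
  apply: le_ereal_inf_tmp => _ [S _ <-]; rewrite riskE.
  by apply: integral_ge0 => x _.
have lbB n : (iota <= adv_risk P eta op (B n))%E.
  by apply: ereal_inf_lbound; exists (B n).
pose U n := \bigcup_i op (A (n + i)%N).
pose D n := \bigcap_i op (A (n + i)%N).
pose S n := U n `\` D n.
have mS n : @measurable _ T (S n).
  apply: measurableD.
    by apply: bigcupT_measurable => i; apply: mU; apply: op_univ; exact: UA.
  by apply: bigcapT_measurable => i; apply: mU; apply: op_univ; exact: UA.
have PT : P setT = 1%E.
  by rewrite (hPmu setT) ?probability_setT //; exact: measurableT.
have PSfin n : P (S n) \is a fin_num.
  rewrite ge0_fin_numE //; apply: (@le_lt_trans _ _ (P setT)).
    by apply: le_measure => //; rewrite inE //; exact: measurableT.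
  by rewrite PT ltry.
have key n m : (n <= m)%N ->
    (adv_risk P eta op (B n) <= adv_risk P eta op (A m) + P (S n))%E.
  move=> nm; rewrite !riskE -(setIT (S n)) -integral_indic //.
  rewrite -ge0_integralD //; [|exact: mg|
    by apply: measurableT_comp => //; exact: measurable_indic].
  apply: ge0_le_integral => //.
  - exact: mg.
  - apply: emeasurable_funD; first exact: mg.
    by apply: measurableT_comp => //; exact: measurable_indic.
  move=> x _; rewrite /g.
  have h1 : op (~` B n) x -> op (~` A m) x.
    by apply: op_mono => y nBy Ay; apply: nBy; exact: AB nm _ Ay.
  have h2 : op (B n) x -> op (A m) x \/ S n x.
    rewrite opB => Ux; have [Am|nAm] := pselect (op (A m) x); first by left.
    right; split => // Dx; apply: nAm; have := Dx (m - n)%N I.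
    by rewrite subnKC.
  have /andP[e0 e1] := eta01 x.
  rewrite !indicE.
  case: (boolP (x \in op (B n))) => [/set_mem/h2 hb|_];
  case: (boolP (x \in op (~` B n))) => [/set_mem/h1/mem_set -> |_];
  case: (boolP (x \in op (A m))) => //= ha;
  case: (boolP (x \in op (~` A m))) => //= _;
  case: (boolP (x \in S n)) => //= hs;
  rewrite -!EFinM -!EFinD lee_fin; try lra.
  all: try by case: hb => /mem_set h; [rewrite h in ha|rewrite h in hs].
have mbS : @measurable _ T (\bigcap_n S n) by apply: bigcapT_measurable.
have h0 : P (\bigcap_n S n) = 0%E.
  have [M [mM M0 sub]] := hA1.
  apply/eqP; rewrite eq_le measure_ge0 andbT -M0.
  apply: le_measure; rewrite ?inE //.
  move=> x hx; apply: sub; right; split.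
    move=> N _; have [[i _ xi] _] := hx N I.
    by exists (N + i)%N => //=; rewrite leq_addr.
  move=> [N _ hN]; have [_ nD] := hx N I; apply: nD => i _.
  by apply: hN; rewrite /= leq_addr.
have cvgS : P \o S @ \oo --> 0%E.
  rewrite -h0; apply: nonincreasing_cvg_mu => //.
    by rewrite -ge0_fin_numE.
  move=> m n mn; apply/subsetPset => x [[j _ Ux] nD]; split.
    by exists (n - m + j)%N => //; rewrite addnA subnKC.
  move=> Dx; apply: nD => k _; have := Dx (n - m + k)%N I.
  by rewrite addnA subnKC.
have bound n : (adv_risk P eta op (B n) <= iota + P (S n))%E.
  have hc : (fun m => adv_risk P eta op (A m) + P (S n))%E @ \oo -->
             (iota + P (S n))%E.
    apply: cvgeD; [exact: fin_num_adde_defl|exact: cvgA|exact: cvg_cst].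
  apply: (cvge_to_ge hc).
  near=> m; apply: key; near: m; exact: nbhs_infty_ge.
apply: (@squeeze_cvge _ _ _ _ (cst iota) _ (fun n => iota + P (S n))%E).
- by apply: nearW => n; rewrite lbB bound.
- exact: cvg_cst.
- rewrite -[X in _ --> X]adde0; apply: cvgeD => //; first exact: fin_num_adde_defl.
  exact: cvg_cst.
Unshelve. all: by end_near.
Qed.
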